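(* Let $n\geq 2$ and let $(\mu_0^n,\cdot,[-,-])$ be a Poisson algebra structure on the associative algebra $\mu_0^n$. Then it is a trivial Poisson algebra; namely $[e_i,e_j]=0$ for all $1\leq i,j\leq n$.
   Context: $\mu_0^n$ is the complex commutative associative algebra with basis $\{e_1,\dots,e_n\}$ and $e_i\cdot e_j=e_{i+j}$ for $2\leq i+j\leq n$, other products zero. A Poisson algebra is a triple $(\mathfrak{L},\cdot,[-,-])$ with $(\mathfrak{L},\cdot)$ commutative associative, $(\mathfrak{L},[-,-])$ a Lie algebra, and $[x,y\cdot z]=[x,y]\cdot z+y\cdot[x,z]$ for all $x,y,z$. It is trivial if $\mathfrak{L}\cdot\mathfrak{L}=0$ or $[\mathfrak{L},\mathfrak{L}]=0$. *)

(* Defs.v *)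
From HB Require Import structures.
From mathcomp Require Import all_boot all_order all_algebra.
From mathcomp Require Import reals.
From mathcomp Require Import complex.
Set Implicit Arguments. Unset Strict Implicit. Unset Printing Implicit Defensive.
Import Order.TTheory GRing.Theory Num.Theory.
Local Open Scope ring_scope.

(* The complex numbers are modelled as R[i] for an arbitrary real field
   R : realType (all realTypes are isomorphic to the reals). *)
Notation Cx R := (complex (Real.sort R)).

(* Elements of mu_0^n are row vectors 'rV[C]_n; the ordinal i : 'I_n
   stands for the basis vector e_(i+1). *)
Definition ebasis (C : nzRingType) (n : nat) (i : 'I_n) : 'rV[C]_n :=
  delta_mx 0 i.

(* The product of mu_0^n: e_a . e_b = e_(a+b) if a+b <= n, 0 otherwise.
   With 0-based indices i (= a-1), j (= b-1), the product lands at
   index k = i + j + 1 (= a + b - 1). *)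
Definition mu0_mul (C : nzRingType) (n : nat) (x y : 'rV[C]_n) : 'rV[C]_n :=
  \row_(k < n) \sum_(i < n) \sum_(j < n)
     (if (i + j).+1 == k :> nat then x 0 i * y 0 j else 0).

Definition is_poisson_bracket (C : comNzRingType) (n : nat)
    (br : 'rV[C]_n -> 'rV[C]_n -> 'rV[C]_n) : Prop :=
  [/\ (forall a x y z, br (a *: x + y) z = a *: br x z + br y z),
      (forall a x y z, br x (a *: y + z) = a *: br x y + br x z),
      (forall x, br x x = 0),
      (forall x y z, br x (br y z) + br y (br z x) + br z (br x y) = 0)
    & (forall x y z, br x (mu0_mul y z)
                     = mu0_mul (br x y) z + mu0_mul y (br x z))].

(* Main.v *)
Require Import Defs.
From HB Require Import structures.
From mathcomp Require Import all_boot all_order all_algebra.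
From mathcomp Require Import reals.
From mathcomp Require Import complex.
Local Open Scope ring_scope.
Import GRing.Theory.

Lemma mu0_mul_e (C : nzRingType) n (i0 k k' : 'I_n) :
  val i0 = 0%N -> val k' = (val k).+1 ->
  mu0_mul (ebasis C i0) (ebasis C k) = ebasis C k'.
Proof.
move=> h0 hk; apply/rowP => m; rewrite /ebasis !mxE.
rewrite (bigD1 i0) //= [X in _ + X]big1 ?addr0 => [|i ne]; last first.
  by apply: big1 => j _; rewrite !mxE (negbTE ne) andbF mul0r; case: ifP.
rewrite (bigD1 k) //= [X in _ + X]big1 ?addr0 => [|j ne]; last first.
  by rewrite !mxE (negbTE ne) andbF mulr0; case: ifP.
rewrite !mxE !eqxx /= mulr1 h0 add0n -hk.
have -> : (val k' == val m) = (m == k') by rewrite eq_sym.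
by case: (m == k').
Qed.

Lemma mu0_mul0r (C : nzRingType) n (y : 'rV[C]_n) : mu0_mul 0 y = 0.
Proof.
apply/rowP => m; rewrite !mxE; apply: big1 => i _; apply: big1 => j _.
by rewrite mxE mul0r; case: ifP.
Qed.

Lemma mu0_mulr0 (C : nzRingType) n (y : 'rV[C]_n) : mu0_mul y 0 = 0.
Proof.
apply/rowP => m; rewrite !mxE; apply: big1 => i _; apply: big1 => j _.
by rewrite mxE mulr0; case: ifP.
Qed.

Lemma br_ind (C : comNzRingType) n br (x : 'rV[C]_n) :
  is_poisson_bracket br ->
  (forall i : 'I_n, val i = 0%N -> br x (ebasis C i) = 0) ->
  forall i : 'I_n, br x (ebasis C i) = 0.
Proof.
case=> _ _ _ _ hL h0 i.
have [i0 Hi0] : exists i0 : 'I_n, val i0 = 0%N.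
  have hn : (0 < n)%N by case: i => i /= /(leq_ltn_trans (leq0n i)).
  by exists (Ordinal hn).
have: val i = val i by [].
move: {2}(val i) => k; elim: k i => [|k IH] i hi; first exact: h0.
have hk : (k < n)%N by apply: ltn_trans (ltn_ord i); rewrite -hi.
rewrite -(@mu0_mul_e C n i0 (Ordinal hk) i Hi0 hi) hL (h0 _ Hi0) (IH (Ordinal hk)) //.
by rewrite mu0_mul0r mu0_mulr0 addr0.
Qed.

Theorem mainTheorem5 (R : realType) (n : nat) (hn : (2 <= n)%N)
    (br : 'rV[Cx R]_n -> 'rV[Cx R]_n -> 'rV[Cx R]_n) :
  is_poisson_bracket br ->
  forall i j : 'I_n, br (ebasis _ i) (ebasis _ j) = 0.
Proof.
move=> P; have P' := P; case: P' => hl hr ha _ _.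
have L1 : forall x y z, br (x + y) z = br x z + br y z.
  by move=> x y z; have := hl 1 x y z; rewrite !scale1r.
have R1 : forall x y z, br z (x + y) = br z x + br z y.
  by move=> x y z; have := hr 1 z x y; rewrite !scale1r.
have anti : forall x y, br y x = - br x y.
  move=> x y; have := ha (x + y); rewrite L1 !R1 !ha add0r addr0 => /eqP.
  by move/eqP => h; apply/eqP; rewrite -addr_eq0 addrC h.
have h1 : forall i j : 'I_n, val i = 0%N -> br (ebasis _ i) (ebasis _ j) = 0.
  move=> i j hi.
  have H := @br_ind _ n br (ebasis _ i) P.
  apply: H => i' hi'.
  by have -> : i' = i by apply: val_inj; rewrite hi hi'.
move=> i j; have H := @br_ind _ n br (ebasis _ i) P.
apply: H => j' hj'.
by rewrite anti h1 // oppr0.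
Qed.
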